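(* For every $\gamma>0$ and every $E>0$ there exists a density operator $\varrho$ with $0<\operatorname{tr}[\varrho H]\le E+1$ such that $$\left\|\widetilde\varrho_{-}-\frac{{\cal N}_{-}(\gamma)[\varrho]}{\operatorname{tr}\big[{\cal N}_{-}(\gamma)[\varrho]\big]}\right\|_1\ \ge\ \sqrt{\frac{E}{E+1}},$$ and, likewise, for every $\gamma>0$ and $E>0$ there exists a density operator $\varrho$ with $0<\operatorname{tr}[\varrho H]\le E+1$ such that the same inequality holds with $\widetilde\varrho_{-},{\cal N}_{-}(\gamma)$ replaced by $\widetilde\varrho_{+},{\cal N}_{+}(\gamma)$.
   Context: ${\cal H}$ is a separable Hilbert space with orthonormal (Fock) basis $\{|n\rangle\}_{n=0}^{\infty}$; $a=\sum_{n\ge1}\sqrt{n}\,|n-1\rangle\langle n|$, $a^{\dagger}=\sum_{n\ge0}\sqrt{n+1}\,|n+1\rangle\langle n|$, $H=a^{\dagger}a$. For a density operator $\varrho$, $\operatorname{tr}[\varrho H^k]=\sum_n n^k\langle n|\varrho|n\rangle$. Ideal outputs: $\widetilde\varrho_{-}=a\varrho a^{\dagger}/\operatorname{tr}[a\varrho a^{\dagger}]$, $\widetilde\varrho_{+}=a^{\dagger}\varrho a/\operatorname{tr}[a^{\dagger}\varrho a]$ (defined for $0<\operatorname{tr}[\varrho H]<\infty$). For $\gamma>0$: ${\cal N}_{-}(\gamma)[\varrho]=(e^{2\gamma}-1)\,a e^{-\gamma H}\varrho e^{-\gamma H}a^{\dagger}$, ${\cal N}_{+}(\gamma)[\varrho]=(e^{2\gamma}-1)\,e^{-\gamma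 H}a^{\dagger}\varrho a e^{-\gamma H}$. $\|X\|_1=\operatorname{tr}\sqrt{X^{\dagger}X}$. *)

(* Defs.v *)
From Stdlib Require Import Reals ClassicalEpsilon.
Open Scope R_scope.

Definition C : Type := (R * R)%type.
Definition Re (z : C) : R := fst z.
Definition Im (z : C) : R := snd z.
Definition RtoC (r : R) : C := (r, 0).
Definition C0 : C := (0, 0).
Definition C1 : C := (1, 0).
Definition Cadd (z w : C) : C := (fst z + fst w, snd z + snd w).
Definition Copp (z : C) : C := (- fst z, - snd z).
Definition Csub (z w : C) : C := Cadd z (Copp w).
Definition Cmul (z w : C) : C :=
  (fst z * fst w - snd z * snd w, fst z * snd w + snd z * fst w).
Definition Cconj (z : C) : C := (fst z, - snd z).
Definition Cinv (z : C) : C :=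
  (fst z / (fst z ^ 2 + snd z ^ 2), - snd z / (fst z ^ 2 + snd z ^ 2)).

Fixpoint Csum (n : nat) (f : nat -> C) : C :=
  match n with O => C0 | S m => Cadd (Csum m f) (f m) end.
Fixpoint Rsum (n : nat) (f : nat -> R) : R :=
  match n with O => 0 | S m => Rsum m f + f m end.

(** * Operators on the Fock space, as matrices in the Fock basis
    [X i j = <i| X |j>]. *)
Definition Op : Type := nat -> nat -> C.

Definition supported (d : nat) (X : Op) : Prop :=
  forall i j, (d <= i)%nat \/ (d <= j)%nat -> X i j = C0.

(** Matrix product with the inner index running over [0, n).  It coincides
    with the operator product whenever one of the factors vanishes outside
    the first [n] basis vectors on the contracted side (all uses below). *)
Definition opmul (n : nat) (X Y : Op) : Op :=
  fun i j => Csum n (fun k => Cmul (X i k) (Y k j)).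
Definition opsub (X Y : Op) : Op := fun i j => Csub (X i j) (Y i j).
Definition opscale (c : C) (X : Op) : Op := fun i j => Cmul c (X i j).
Definition adj (X : Op) : Op := fun i j => Cconj (X j i).
Definition trace (n : nat) (X : Op) : C := Csum n (fun i => X i i).

(** annihilation a = sum_{n>=1} sqrt n |n-1><n|, creation a^dagger = adj a *)
Definition ann : Op :=
  fun i j => if Nat.eqb j (S i) then RtoC (sqrt (INR j)) else C0.
Definition cre : Op := adj ann.
(** e^{-gamma H}, H = a^dagger a = sum n |n><n| *)
Definition expmH (g : R) : Op :=
  fun i j => if Nat.eqb i j then RtoC (exp (- g * INR i)) else C0.

Definition energy (d : nat) (rho : Op) : R :=
  Rsum d (fun i => INR i * Re (rho i i)).

Definition density (d : nat) (rho : Op) : Prop :=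
  supported d rho /\
  (forall i j, rho i j = Cconj (rho j i)) /\
  (forall v : nat -> C,
      0 <= Re (Csum d (fun i => Csum d (fun j =>
                 Cmul (Cconj (v i)) (Cmul (rho i j) (v j)))))) /\
  trace d rho = C1.

(** * Trace norm ||X||_1 = tr sqrt(X^dagger X) = sum of singular values,
    computed through a singular value decomposition X = U S V^dagger on the
    first n basis vectors. *)
Definition unitary (n : nat) (U : Op) : Prop :=
  forall i j, (i < n)%nat -> (j < n)%nat ->
    opmul n (adj U) U i j = (if Nat.eqb i j then C1 else C0).

Definition is_svd (n : nat) (X U : Op) (s : nat -> R) (V : Op) : Prop :=
  unitary n U /\ unitary n V /\ (forall k, 0 <= s k) /\
  forall i j, (i < n)%nat -> (j < n)%nat ->
    X i j = Csum n (fun k => Cmul (U i k) (Cmul (RtoC (s k)) (Cconj (V j k)))).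

Definition tnorm (n : nat) (X : Op) : R :=
  epsilon (inhabits 0)
    (fun t => exists U s V, is_svd n X U s V /\ t = Rsum n s).

(** * The ideal outputs and the noisy channels, for rho supported in d
    (all computations are exact with truncation n = S d). *)
Definition normalize (n : nat) (X : Op) : Op := opscale (Cinv (trace n X)) X.

Definition rho_minus (d : nat) (rho : Op) : Op :=
  normalize (S d) (opmul (S d) (opmul (S d) ann rho) cre).
Definition rho_plus (d : nat) (rho : Op) : Op :=
  normalize (S d) (opmul (S d) (opmul (S d) cre rho) ann).

Definition N_minus (g : R) (d : nat) (rho : Op) : Op :=
  let n := S d in
  opscale (RtoC (exp (2 * g) - 1))
    (opmul n (opmul n (opmul n ann (expmH g)) rho) (opmul n (expmH g) cre)).
Definition N_plus (g : R) (d : nat) (rho : Op) : Op :=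
  let n := S d in
  opscale (RtoC (exp (2 * g) - 1))
    (opmul n (opmul n (opmul n (expmH g) cre) rho) (opmul n ann (expmH g))).

(* Main.v *)
Require Import Defs.
From Stdlib Require Import Reals ClassicalEpsilon Lra Lia Psatz FunctionalExtensionality.
Open Scope R_scope.

Lemma Cpair (z : Defs.C) : z = (fst z, snd z). Proof. destruct z; reflexivity. Qed.
Lemma Cadd_0_l z : Cadd C0 z = z.
Proof. destruct z; unfold Cadd, C0; simpl; f_equal; ring. Qed.
Lemma Cadd_0_r z : Cadd z C0 = z.
Proof. destruct z; unfold Cadd, C0; simpl; f_equal; ring. Qed.
Lemma Cmul_0_l z : Cmul C0 z = C0.
Proof. destruct z; unfold Cmul, C0; simpl; f_equal; ring. Qed.
Lemma Cmul_0_r z : Cmul z C0 = C0.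
Proof. destruct z; unfold Cmul, C0; simpl; f_equal; ring. Qed.
Lemma Cmul_RtoC a b : Cmul (RtoC a) (RtoC b) = RtoC (a * b).
Proof. unfold Cmul, RtoC; simpl; f_equal; ring. Qed.

Lemma Csum_ext n f g : (forall k, (k < n)%nat -> f k = g k) -> Csum n f = Csum n g.
Proof. induction n; intros H; simpl; auto. rewrite IHn by (intros; apply H; lia). rewrite H by lia; auto. Qed.

Lemma Csum_single n f m : (forall k, k <> m -> f k = C0) ->
  Csum n f = if Nat.ltb m n then f m else C0.
Proof.
  intros H; induction n; simpl. destruct (Nat.ltb_spec m 0); [lia|auto].
  rewrite IHn. destruct (Nat.eq_dec n m).
  - subst. destruct (Nat.ltb_spec m m); [lia|]. destruct (Nat.ltb_spec m (S m)); [|lia].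
    apply Cadd_0_l.
  - rewrite (H n n0), Cadd_0_r.
    destruct (Nat.ltb_spec m n); destruct (Nat.ltb_spec m (S n)); auto; lia.
Qed.

Lemma Re_Csum n f : Re (Csum n f) = Rsum n (fun k => Re (f k)).
Proof. induction n; simpl; auto. unfold Re in *; simpl. rewrite IHn; auto. Qed.

Lemma Csum_RtoC n f : Csum n (fun k => RtoC (f k)) = RtoC (Rsum n f).
Proof. induction n; simpl; auto. rewrite IHn. unfold Cadd, RtoC; simpl; f_equal; ring. Qed.

Lemma Rsum_ext n f g : (forall k, (k < n)%nat -> f k = g k) -> Rsum n f = Rsum n g.
Proof. induction n; intros H; simpl; auto. rewrite IHn by (intros; apply H; lia). rewrite H by lia; auto. Qed.
Lemma Rsum_plus n f g : Rsum n (fun k => f k + g k) = Rsum n f + Rsum n g.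
Proof. induction n; simpl; [ring|]. rewrite IHn; ring. Qed.
Lemma Rsum_scal n c f : Rsum n (fun k => c * f k) = c * Rsum n f.
Proof. induction n; simpl; [ring|]. rewrite IHn; ring. Qed.
Lemma Rsum_le n f g : (forall k, (k < n)%nat -> f k <= g k) -> Rsum n f <= Rsum n g.
Proof. induction n; intros H; simpl; [lra|]. assert (H1 := H n (Nat.lt_succ_diag_r n)).
  assert (Rsum n f <= Rsum n g) by (apply IHn; intros; apply H; lia). lra. Qed.
Lemma Rsum_swap n m F : Rsum n (fun i => Rsum m (fun k => F i k)) = Rsum m (fun k => Rsum n (fun i => F i k)).
Proof. induction n; simpl.
  - induction m; simpl; auto. rewrite <- IHm; ring.
  - rewrite IHn. rewrite <- Rsum_plus. auto. Qed.
Lemma Rsum_single n p v : Rsum n (fun i => if Nat.eqb i p then v else 0) = if Nat.ltb p n then v else 0.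
Proof. induction n; simpl. destruct (Nat.ltb_spec p 0); [lia|auto].
  rewrite IHn. destruct (Nat.eqb_spec n p).
  - subst. destruct (Nat.ltb_spec p p); [lia|]. destruct (Nat.ltb_spec p (S p)); [|lia]. ring.
  - destruct (Nat.ltb_spec p n); destruct (Nat.ltb_spec p (S n)); try lia; ring.
Qed.
Lemma Rsum_ge2 n f p q : (forall i, (i < n)%nat -> 0 <= f i) -> p <> q -> (p < n)%nat -> (q < n)%nat ->
  f p + f q <= Rsum n f.
Proof.
  intros H Hpq Hp Hq.
  apply Rle_trans with (Rsum n (fun i => (if Nat.eqb i p then f p else 0) + (if Nat.eqb i q then f q else 0))).
  - rewrite Rsum_plus, !Rsum_single. destruct (Nat.ltb_spec p n); destruct (Nat.ltb_spec q n); try lia; lra.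
  - apply Rsum_le. intros k Hk. destruct (Nat.eqb_spec k p); destruct (Nat.eqb_spec k q); subst; try lia.
    + assert (0 <= f q) by (apply H; lia). lra.
    + assert (0 <= f p) by (apply H; lia). lra.
    + assert (0 <= f k) by (apply H; lia). lra.
Qed.

Definition Dg (f : nat -> R) : Op := fun i j => if Nat.eqb i j then RtoC (f i) else C0.
Definition Sh (f : nat -> R) : Op := fun i j => if Nat.eqb j (S i) then RtoC (f j) else C0.
Definition Dn (f : nat -> R) : Op := fun i j => if Nat.eqb i (S j) then RtoC (f i) else C0.

Lemma ann_Sh : ann = Sh (fun j => sqrt (INR j)). Proof. reflexivity. Qed.
Lemma expmH_Dg g : expmH g = Dg (fun i => exp (- g * INR i)). Proof. reflexivity. Qed.
Lemma cre_Dn : cre = Dn (fun i => sqrt (INR i)).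
Proof. extensionality i; extensionality j. unfold cre, adj, ann, Dn.
  destruct (Nat.eqb i (S j)); unfold Cconj, RtoC, C0; simpl; f_equal; ring. Qed.

Ltac bsimp := repeat (first
  [ rewrite Nat.eqb_refl
  | match goal with
    | |- context [Nat.eqb ?a ?b] => first
        [ rewrite (proj2 (Nat.eqb_neq a b)) by lia | rewrite (proj2 (Nat.eqb_eq a b)) by lia ]
    | |- context [Nat.ltb ?a ?b] => first
        [ rewrite (proj2 (Nat.ltb_lt a b)) by lia | rewrite (proj2 (Nat.ltb_ge a b)) by lia ]
    end ]).

Lemma ShDg n f h : opmul n (Sh f) (Dg h) = Sh (fun j => if Nat.ltb j n then f j * h j else 0).
Proof.
  extensionality i; extensionality j. unfold opmul.
  rewrite (Csum_single _ _ j).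
  - unfold Sh, Dg. bsimp. destruct (Nat.ltb_spec j n); destruct (Nat.eqb_spec j (S i)); bsimp;
    try rewrite Cmul_RtoC; try rewrite Cmul_0_l; reflexivity.
  - intros k Hk. unfold Dg. bsimp. apply Cmul_0_r.
Qed.

Lemma DgDn n e f : opmul n (Dg e) (Dn f) = Dn (fun i => if Nat.ltb i n then e i * f i else 0).
Proof.
  extensionality i; extensionality j. unfold opmul.
  rewrite (Csum_single _ _ i).
  - unfold Dn, Dg. bsimp. destruct (Nat.ltb_spec i n); destruct (Nat.eqb_spec i (S j)); bsimp;
    try rewrite Cmul_RtoC; try rewrite Cmul_0_r; reflexivity.
  - intros k Hk. unfold Dg. bsimp. apply Cmul_0_l.
Qed.

Lemma ShDn n f h : opmul n (Sh f) (Dn h) = Dg (fun i => if Nat.ltb (S i) n then f (S i) * h (S i) else 0).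
Proof.
  extensionality i; extensionality j. unfold opmul.
  rewrite (Csum_single _ _ (S i)).
  - unfold Dn, Dg, Sh. bsimp. destruct (Nat.ltb_spec (S i) n); destruct (Nat.eqb_spec i j); subst; bsimp;
    try rewrite Cmul_RtoC; try rewrite Cmul_0_r; reflexivity.
  - intros k Hk. unfold Sh. bsimp. apply Cmul_0_l.
Qed.

Lemma DnDg n f h : opmul n (Dn f) (Dg h) = Dn (fun i => if Nat.ltb (pred i) n then f i * h (pred i) else 0).
Proof.
  extensionality i; extensionality j. unfold opmul.
  rewrite (Csum_single _ _ j).
  - unfold Dn, Dg. bsimp. destruct (Nat.eqb_spec i (S j)); subst; simpl; bsimp.
    + destruct (Nat.ltb_spec j n); try rewrite Cmul_RtoC; reflexivity.
    + rewrite Cmul_0_l. destruct (Nat.ltb j n); reflexivity.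
  - intros k Hk. unfold Dg. bsimp. apply Cmul_0_r.
Qed.

Lemma DnSh n f h : opmul n (Dn f) (Sh h) =
  Dg (fun i => match i with O => 0 | S m => if Nat.ltb m n then f i * h i else 0 end).
Proof.
  extensionality i; extensionality j. unfold opmul. destruct i as [|p].
  - rewrite (Csum_single _ _ 0).
    + unfold Dn, Dg. simpl. rewrite Cmul_0_l. destruct j; destruct (Nat.ltb 0 n); reflexivity.
    + intros k Hk. unfold Dn. simpl. apply Cmul_0_l.
  - rewrite (Csum_single _ _ p).
    + unfold Dn, Dg, Sh. bsimp. destruct (Nat.ltb_spec p n); destruct (Nat.eqb_spec (S p) j); subst; bsimp;
      try rewrite Cmul_RtoC; try rewrite Cmul_0_r; reflexivity.
    + intros k Hk. unfold Dn. bsimp. apply Cmul_0_l.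
Qed.

Lemma scale_Dg c f : opscale (RtoC c) (Dg f) = Dg (fun i => c * f i).
Proof. extensionality i; extensionality j. unfold opscale, Dg.
  destruct (Nat.eqb i j). apply Cmul_RtoC. apply Cmul_0_r. Qed.

Lemma trace_Dg n f : trace n (Dg f) = RtoC (Rsum n f).
Proof. unfold trace. rewrite <- Csum_RtoC. apply Csum_ext. intros k _. unfold Dg. bsimp. reflexivity. Qed.

Lemma normalize_Dg n f : Rsum n f <> 0 -> normalize n (Dg f) = Dg (fun i => f i / Rsum n f).
Proof. intros H. unfold normalize. rewrite trace_Dg.
  extensionality i; extensionality j. unfold opscale, Dg.
  destruct (Nat.eqb i j).
  - unfold Cmul, Cinv, RtoC; simpl. f_equal; field; auto.
  - apply Cmul_0_r.
Qed.

Lemma sub_Dg f h : opsub (Dg f) (Dg h) = Dg (fun i => f i - h i).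
Proof. extensionality i; extensionality j. unfold opsub, Dg, Csub, Cadd, Copp.
  destruct (Nat.eqb i j); unfold RtoC, C0; simpl; f_equal; ring. Qed.

Lemma unit_col n U k : unitary n U -> (k < n)%nat ->
  Rsum n (fun i => fst (U i k) * fst (U i k) + snd (U i k) * snd (U i k)) = 1.
Proof.
  intros HU Hk. specialize (HU k k Hk Hk). rewrite Nat.eqb_refl in HU.
  apply (f_equal Re) in HU. unfold opmul in HU. rewrite Re_Csum in HU.
  transitivity (Re Defs.C1); [|reflexivity]. rewrite <- HU. apply Rsum_ext. intros i _. unfold Re, Cmul, adj, Cconj; simpl. ring.
Qed.

Lemma svd_lower n X U s V sg : is_svd n X U s V -> (forall i, -1 <= sg i <= 1) ->
  Rsum n (fun i => sg i * Re (X i i)) <= Rsum n s.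
Proof.
  intros (HU & HV & Hs & HX) Hsg.
  rewrite (Rsum_ext n _ (fun i => Rsum n (fun k => s k * (sg i * (fst (U i k) * fst (V i k) + snd (U i k) * snd (V i k)))))).
  2:{ intros i Hi. rewrite HX by auto. rewrite Re_Csum, <- Rsum_scal. apply Rsum_ext. intros k _.
      unfold Re, Cmul, RtoC, Cconj; simpl. ring. }
  rewrite Rsum_swap.
  apply Rsum_le. intros k Hk.
  rewrite Rsum_scal.
  assert (Rsum n (fun i => sg i * (fst (U i k) * fst (V i k) + snd (U i k) * snd (V i k))) <= 1).
  { 
    apply Rle_trans with (Rsum n (fun i => /2 * ((fst (U i k) * fst (U i k) + snd (U i k) * snd (U i k)) + (fst (V i k) * fst (V i k) + snd (V i k) * snd (V i k))))).
    - apply Rsum_le. intros i _. specialize (Hsg i).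
      set (a := fst (U i k)). set (b := snd (U i k)). set (c := fst (V i k)). set (d := snd (V i k)).
      pose proof (Rle_0_sqr (a - sg i * c)). pose proof (Rle_0_sqr (b - sg i * d)). unfold Rsqr in *.
      assert (sg i * sg i <= 1) by nra. nra.
    - rewrite Rsum_scal, Rsum_plus, !unit_col by auto. lra. }
  specialize (Hs k). nra.
Qed.

Lemma tnorm_Dg n dl : Rsum n (fun i => Rabs (dl i)) <= tnorm n (Dg dl).
Proof.
  set (sg := fun i => if Rle_dec 0 (dl i) then 1 else -1).
  assert (Hsg : forall i, sg i * dl i = Rabs (dl i)).
  { intros i; unfold sg; destruct (Rle_dec 0 (dl i)).
    rewrite Rabs_right; lra. rewrite Rabs_left; lra. }
  assert (Hsg2 : forall i, sg i * sg i = 1).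
  { intros i; unfold sg; destruct (Rle_dec 0 (dl i)); lra. }
  unfold tnorm.
  set (P := fun t => exists U s V, is_svd n (Dg dl) U s V /\ t = Rsum n s).
  assert (HE : exists t, P t).
  { exists (Rsum n (fun i => Rabs (dl i))). exists (Dg sg), (fun i => Rabs (dl i)), (Dg (fun _ => 1)).
    split; [|reflexivity]. split; [|split; [|split]].
    - intros i j Hi Hj. unfold opmul. rewrite (Csum_single _ _ i).
      + unfold adj, Dg. bsimp. destruct (Nat.eqb_spec i j).
        * subst. unfold Cmul, Cconj, RtoC, Defs.C1; simpl. f_equal; [rewrite Hsg2|]; ring.
        * rewrite Cmul_0_r. reflexivity.
      + intros k Hk. unfold adj, Dg. bsimp. unfold Cmul, Cconj, C0; simpl; f_equal; ring.
    - intros i j Hi Hj. unfold opmul. rewrite (Csum_single _ _ i).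
      + unfold adj, Dg. bsimp. destruct (Nat.eqb_spec i j).
        * subst. unfold Cmul, Cconj, RtoC, Defs.C1; simpl. f_equal; ring.
        * rewrite Cmul_0_r. reflexivity.
      + intros k Hk. unfold adj, Dg. bsimp. unfold Cmul, Cconj, C0; simpl; f_equal; ring.
    - intros k; apply Rabs_pos.
    - intros i j Hi Hj. rewrite (Csum_single _ _ i).
      + unfold Dg. bsimp. destruct (Nat.eqb_spec i j).
        * subst. unfold Cmul, Cconj, RtoC; simpl. rewrite Nat.eqb_refl; simpl. f_equal; [rewrite <- (Hsg j); transitivity ((sg j * sg j) * dl j); [rewrite Hsg2|]; ring|ring].
        * rewrite (proj2 (Nat.eqb_neq j i)) by auto. unfold Cmul, Cconj, RtoC, C0; simpl. f_equal; ring.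
      + intros k Hk. unfold Dg. bsimp. apply Cmul_0_l. }
  destruct (epsilon_spec (inhabits 0) P HE) as (U & s & V & Hsvd & ->).
  rewrite (Rsum_ext n _ (fun i => sg i * Re (Dg dl i i))).
  - apply (svd_lower n _ U s V); auto. intros i; unfold sg; destruct (Rle_dec 0 (dl i)); lra.
  - intros k _. unfold Dg. bsimp. unfold Re, RtoC; simpl. auto.
Qed.

Lemma density_Dg d w : (forall i, 0 <= w i) -> (forall i, (d <= i)%nat -> w i = 0) -> Rsum d w = 1 ->
  density d (Dg w).
Proof.
  intros Hp Hs H1. split; [|split; [|split]].
  - intros i j Hij. unfold Dg. destruct (Nat.eqb_spec i j). subst. rewrite Hs by lia. reflexivity. reflexivity.
  - intros i j. unfold Dg. destruct (Nat.eqb_spec i j); subst; bsimp; unfold Cconj, RtoC, C0; simpl; f_equal; ring.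
  - intros v. rewrite Re_Csum. 
    rewrite (Rsum_ext d _ (fun i => w i * (fst (v i) * fst (v i) + snd (v i) * snd (v i)))).
    + apply Rle_trans with (Rsum d (fun _ => 0)). right. clear. induction d; simpl; [auto|rewrite <- IHd; ring].
      apply Rsum_le. intros k _. specialize (Hp k). nra.
    + intros i Hi. rewrite (Csum_single _ _ i).
      * unfold Dg. bsimp. unfold Re, Cmul, Cconj, RtoC; simpl. ring.
      * intros k Hk. unfold Dg. bsimp. rewrite Cmul_0_l. apply Cmul_0_r.
  - rewrite trace_Dg, H1. reflexivity.
Qed.

Lemma energy_Dg d w : energy d (Dg w) = Rsum d (fun i => INR i * w i).
Proof. unfold energy. apply Rsum_ext. intros k _. unfold Dg. bsimp. reflexivity. Qed.

Lemma Dg_ext f h : (forall i, f i = h i) -> Dg f = Dg h.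
Proof. intros H; extensionality i; extensionality j; unfold Dg; rewrite H; auto. Qed.

Lemma sqrt_sq2 x : 0 <= x -> sqrt x ^ 2 = x.
Proof. intros H. rewrite <- Rsqr_pow2. apply Rsqr_sqrt; auto. Qed.

Lemma minus_case g E : 0 < g -> 0 < E ->
     exists (d : nat) (rho : Op),
       density d rho /\ 0 < energy d rho <= E + 1 /\
       tnorm (S d) (opsub (rho_minus d rho)
                          (normalize (S d) (N_minus g d rho)))
         >= sqrt (E / (E + 1)).
Proof.
  intros Hg HE.
  destruct (INR_archimed 1 (4 / g)) as [m0 Hm0]; [lra|].
  set (m := S m0).
  assert (Hm1 : (1 <= m)%nat) by (unfold m; lia).
  assert (Hgm : 4 <= g * INR m).
  { unfold m. rewrite S_INR. assert (g*(4/g) = 4) by (field; lra). assert (g * INR m0 > g*(4/g)) by (apply Rmult_lt_compat_l; lra). rewrite Rmult_plus_distr_l. lra. }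
  assert (HINm : 1 <= INR m) by (exact (le_INR 1 m Hm1)).
  set (c := 3 / (8 * INR (S m))).
  assert (HSm : INR (S m) = INR m + 1) by apply S_INR.
  assert (Hc8 : c * (8*(INR m+1)) = 3) by (unfold c; rewrite HSm; field; lra).
  assert (Hc : 0 < c <= 3/16) by (split; nra).
  set (w := fun i => if Nat.eqb i 0 then 7/8 - c else if Nat.eqb i 1 then 1/8 else if Nat.eqb i (S m) then c else 0).
  set (d := S (S m)).
  exists d, (Dg w).
  assert (Hsupp : forall i, (d <= i)%nat -> w i = 0) by (intros i Hi; unfold w, d in *; bsimp; auto).
  assert (Hw : forall i, w i = (if Nat.eqb i 0 then 7/8 - c else 0) + (if Nat.eqb i 1 then 1/8 else 0) + (if Nat.eqb i (S m) then c else 0)).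
  { intros i; unfold w. destruct (Nat.eqb_spec i 0); [subst; bsimp; ring|].
    destruct (Nat.eqb_spec i 1); [subst; bsimp; ring|]. destruct (Nat.eqb_spec i (S m)); [subst; bsimp; ring|]. ring. }
  split; [|split].
  - apply density_Dg; auto.
    + intros i; unfold w. destruct (Nat.eqb i 0); [lra|]. destruct (Nat.eqb i 1); [lra|]. destruct (Nat.eqb i (S m)); lra.
    + rewrite (Rsum_ext _ _ _ (fun k _ => Hw k)). rewrite !Rsum_plus, !Rsum_single. unfold d. bsimp. lra.
  - rewrite energy_Dg. rewrite (Rsum_ext _ _ (fun i => (if Nat.eqb i 1 then 1/8 else 0) + (if Nat.eqb i (S m) then INR (S m) * c else 0))).
    + rewrite !Rsum_plus, !Rsum_single. unfold d. bsimp.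
      assert (INR (S m) * c = 3/8) by (unfold c; field; lra). lra.
    + intros i _. rewrite Hw. destruct (Nat.eqb_spec i 0); [subst; bsimp; simpl; ring|].
      destruct (Nat.eqb_spec i 1); [subst; bsimp; simpl; ring|]. destruct (Nat.eqb_spec i (S m)); [subst; bsimp; ring|]. ring.
  - set (x := exp (- g * INR 1) ^ 2). set (y := exp (- g * INR (S m)) ^ 2).
    set (K := exp (2 * g) - 1).
    assert (Hx : 0 < x) by (unfold x; apply pow_lt; apply exp_pos).
    assert (Hy : 0 < y) by (unfold y; apply pow_lt; apply exp_pos).
    assert (HK : 0 < K) by (unfold K; assert (1 < exp (2*g)) by (rewrite <- exp_0; apply exp_increasing; lra); lra).
    assert (Hxy : 9 * y <= x).
    { unfold x, y. rewrite S_INR, INR_1.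
      replace (- g * (INR m + 1)) with (- g * 1 + - (g * INR m)) by ring. rewrite exp_plus, exp_Ropp.
      assert (5 < exp (g * INR m)) by (pose proof (exp_ineq1 (g * INR m)); lra).
      assert (0 < exp (-g*1)) by apply exp_pos.
      set (u := exp (-g*1)) in *. set (v := exp (g * INR m)) in *. clearbody u v.
      assert (/v < /5) by (apply Rinv_lt_contravar; lra). assert (0 < /v) by (apply Rinv_0_lt_compat; lra).
      assert (Hvv: /v * /v <= 1/9) by nra. assert (0 < u^2) by (apply pow_lt; lra). replace ((u * /v)^2) with (u^2 * (/v * /v)) by ring. nra. }
    set (fa := fun i => (if Nat.eqb i 0 then 1/8 else 0) + (if Nat.eqb i m then 3/8 else 0)).
    set (fb := fun i => (if Nat.eqb i 0 then K * x * (1/8) else 0) + (if Nat.eqb i m then K * y * (3/8) else 0)).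
    assert (Hsq : forall j, sqrt (INR j) ^ 2 = INR j) by (intros; apply sqrt_sq2, pos_INR).
    assert (Ha : rho_minus d (Dg w) = normalize (S d) (Dg fa)).
    { unfold rho_minus. rewrite ann_Sh, cre_Dn, ShDg, ShDn. f_equal. apply Dg_ext. intros i.
      unfold fa. rewrite Hw. unfold d.
      destruct (Nat.eqb_spec i 0); [subst; bsimp; rewrite INR_1, sqrt_1; ring|].
      destruct (Nat.eqb_spec i m); [subst; bsimp; ring_simplify; rewrite Hsq; unfold c; field; lra|].
      destruct (Nat.ltb_spec (S i) (S (S (S m)))); bsimp; ring. }
    assert (Hb : N_minus g d (Dg w) = Dg fb).
    { unfold N_minus. rewrite ann_Sh, cre_Dn, expmH_Dg, !ShDg, DgDn, ShDn. fold K. rewrite scale_Dg. apply Dg_ext. intros i.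
      unfold fb. rewrite Hw. unfold d.
      destruct (Nat.eqb_spec i 0); [subst; bsimp; unfold x; rewrite INR_1, sqrt_1; ring|].
      destruct (Nat.eqb_spec i m); [subst; bsimp; unfold y; ring_simplify; rewrite Hsq; unfold c; field; lra|].
      destruct (Nat.ltb_spec (S i) (S (S (S m)))); bsimp; ring. }
    assert (HSa : Rsum (S d) fa = 1/2) by (unfold fa, d; rewrite Rsum_plus, !Rsum_single; bsimp; lra).
    assert (HSb : Rsum (S d) fb = K * x * (1/8) + K * y * (3/8)) by (unfold fb, d; rewrite Rsum_plus, !Rsum_single; bsimp; lra).
    assert (HSb0 : 0 < K * x * (1/8) + K * y * (3/8)) by (assert (0 < K * x) by nra; assert (0 < K*y) by nra; lra).
    rewrite Ha, Hb, !normalize_Dg, sub_Dg, HSa, HSb by lra.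
    apply Rle_ge. eapply Rle_trans; [|apply tnorm_Dg].
    eapply Rle_trans; [|apply (Rsum_ge2 _ _ 0 m); [intros; apply Rabs_pos|lia|unfold d; lia|unfold d; lia]].
    unfold fa, fb. bsimp.
    assert (sqrt (E / (E+1)) <= 1).
    { apply Rle_trans with (sqrt 1); [|rewrite sqrt_1; lra]. apply sqrt_le_1_alt.
      assert (HE1 : E / (E+1) * (E+1) = E) by (field; lra). set (q := E/(E+1)) in *. clearbody q. destruct (Rle_dec q 1); auto. assert ((q-1)*(E+1) > 0) by (apply Rmult_gt_0_compat; lra). nra. }
    set (r := (K * x * (1 / 8) + 0) / (K * x * (1 / 8) + K * y * (3 / 8))).
    assert (Hr : 3/4 <= r).
    { assert (Hrs : r * (K * x * (1 / 8) + K * y * (3 / 8)) = K * x * (1/8)) by (unfold r; field; lra).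
      clearbody r. assert (K * (x - 9*y) >= 0) by nra.
      destruct (Rle_dec (3/4) r); auto. nra. }
    assert (Hr2 : (0 + K * y * (3 / 8)) / (K * x * (1 / 8) + K * y * (3 / 8)) = 1 - r).
    { unfold r. field. lra. }
    rewrite Hr2.
    rewrite (Rabs_left ((1 / 8 + 0) / (1 / 2) - r)) by lra.
    rewrite (Rabs_right ((0 + 3 / 8) / (1 / 2) - (1 - r))) by lra. lra.
Qed.

Lemma plus_case g E : 0 < g -> 0 < E ->
     exists (d : nat) (rho : Op),
       density d rho /\ 0 < energy d rho <= E + 1 /\
       tnorm (S d) (opsub (rho_plus d rho)
                          (normalize (S d) (N_plus g d rho)))
         >= sqrt (E / (E + 1)).
Proof.
  intros Hg HE.
  set (T := 2 * (E+4) * (E+2) / E).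
  assert (HT : T * E = 2 * (E+4) * (E+2)) by (unfold T; field; lra).
  assert (HT0 : 0 < T) by (unfold T; apply Rdiv_lt_0_compat; nra).
  destruct (INR_archimed 1 (2 * (E+1) + T / g)) as [k0 Hk0]; [lra|].
  set (k := S k0).
  assert (Hk1 : (1 <= k)%nat) by (unfold k; lia).
  assert (Hgk : T <= g * INR k /\ 2 * (E+1) <= INR k).
  { unfold k. rewrite S_INR. assert (g*(T/g) = T) by (field; lra).
    assert (0 < T/g) by (apply Rdiv_lt_0_compat; lra).
    assert (g * INR k0 > g*(T/g)) by (apply Rmult_lt_compat_l; lra). split; [rewrite Rmult_plus_distr_l|]; lra. }
  assert (HINk : 1 <= INR k) by (exact (le_INR 1 k Hk1)).
  set (c := (E+1) / INR k).
  assert (HSk : INR (S k) = INR k + 1) by apply S_INR.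
  assert (Hck : c * INR k = E+1) by (unfold c; field; lra).
  assert (Hc : 0 < c <= 1/2).
  { split. unfold c; apply Rdiv_lt_0_compat; lra. clearbody c. nra. }
  set (w := fun i => if Nat.eqb i 0 then 1 - c else if Nat.eqb i k then c else 0).
  set (d := S k).
  exists d, (Dg w).
  assert (Hsupp : forall i, (d <= i)%nat -> w i = 0) by (intros i Hi; unfold w, d in *; bsimp; auto).
  assert (Hw : forall i, w i = (if Nat.eqb i 0 then 1 - c else 0) + (if Nat.eqb i k then c else 0)).
  { intros i; unfold w. destruct (Nat.eqb_spec i 0); [subst; bsimp; ring|].
    destruct (Nat.eqb_spec i k); [subst; bsimp; ring|]. ring. }
  split; [|split].
  - apply density_Dg; auto.
    + intros i; unfold w. destruct (Nat.eqb i 0); [lra|]. destruct (Nat.eqb i k); lra.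
    + rewrite (Rsum_ext _ _ _ (fun k _ => Hw k)). rewrite !Rsum_plus, !Rsum_single. unfold d. bsimp. lra.
  - rewrite energy_Dg. rewrite (Rsum_ext _ _ (fun i => (if Nat.eqb i k then INR k * c else 0))).
    + rewrite !Rsum_single. unfold d. bsimp. lra.
    + intros i _. rewrite Hw. destruct (Nat.eqb_spec i 0); [subst; bsimp; simpl; ring|].
      destruct (Nat.eqb_spec i k); [subst; bsimp; ring|]. ring.
  - set (x := exp (- g * INR 1) ^ 2). set (y := exp (- g * INR (S k)) ^ 2).
    set (K := exp (2 * g) - 1).
    assert (Hx : 0 < x) by (unfold x; apply pow_lt; apply exp_pos).
    assert (Hy : 0 < y) by (unfold y; apply pow_lt; apply exp_pos).
    assert (HK : 0 < K) by (unfold K; assert (1 < exp (2*g)) by (rewrite <- exp_0; apply exp_increasing; lra); lra).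
    assert (Hxy : y * (2 * (E+4) * (E+2)) <= E * x).
    { unfold x, y. rewrite S_INR, INR_1.
      replace (- g * (INR k + 1)) with (- g * 1 + - (g * INR k)) by ring. rewrite exp_plus, exp_Ropp.
      assert (g * INR k < exp (g * INR k)) by (pose proof (exp_ineq1 (g * INR k)); lra).
      assert (0 < exp (-g*1)) by apply exp_pos.
      set (u := exp (-g*1)) in *. set (v := exp (g * INR k)) in *. clearbody u v.
      rewrite <- HT.
      assert (T < v) by lra.
      assert (/v * v = 1) by (field; lra). assert (0 < /v) by (apply Rinv_0_lt_compat; lra).
      assert (/v * T <= 1) by nra. assert (/v <= 1) by nra.
      assert (0 < u^2) by (apply pow_lt; lra).
      assert (Hp : /v * (/v * T) <= 1) by nra.
      replace ((u * /v)^2 * (T * E)) with ((u^2 * E) * (/v * (/v * T))) by ring.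
      assert (0 < u^2 * E) by nra. nra. }
    set (fa := fun i => (if Nat.eqb i 1 then 1 - c else 0) + (if Nat.eqb i (S k) then INR (S k) * c else 0)).
    set (fb := fun i => (if Nat.eqb i 1 then K * x * (1 - c) else 0) + (if Nat.eqb i (S k) then K * y * (INR (S k) * c) else 0)).
    assert (Hsq : forall j, sqrt (INR j) ^ 2 = INR j) by (intros; apply sqrt_sq2, pos_INR).
    assert (Ha : rho_plus d (Dg w) = normalize (S d) (Dg fa)).
    { unfold rho_plus. rewrite ann_Sh, cre_Dn, DnDg, DnSh. f_equal. apply Dg_ext. intros i.
      unfold fa. destruct i as [|j]; [bsimp; ring|]. simpl pred. rewrite Hw. unfold d.
      destruct (Nat.eqb_spec j 0); [subst; bsimp; rewrite INR_1, sqrt_1; ring|].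
      destruct (Nat.eqb_spec j k); [subst; bsimp; ring_simplify; rewrite Hsq; ring|].
      destruct (Nat.ltb_spec j (S (S k))); bsimp; ring. }
    assert (Hb : N_plus g d (Dg w) = Dg fb).
    { unfold N_plus. rewrite ann_Sh, cre_Dn, expmH_Dg, DgDn, DnDg, ShDg, DnSh. fold K. rewrite scale_Dg. apply Dg_ext. intros i.
      unfold fb. destruct i as [|j]; [bsimp; ring|]. simpl pred. rewrite Hw. unfold d.
      destruct (Nat.eqb_spec j 0); [subst; bsimp; unfold x; rewrite INR_1, sqrt_1; ring|].
      destruct (Nat.eqb_spec j k); [subst; bsimp; unfold y; ring_simplify; rewrite Hsq; ring|].
      destruct (Nat.ltb_spec j (S (S k))); bsimp; ring. }
    assert (HSa : Rsum (S d) fa = E + 2) by (unfold fa, d; rewrite Rsum_plus, !Rsum_single; bsimp; rewrite HSk; lra).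
    assert (HB : 0 < INR (S k) * c) by (rewrite HSk; nra).
    assert (HSb : Rsum (S d) fb = K * x * (1 - c) + K * y * (INR (S k) * c)) by (unfold fb, d; rewrite Rsum_plus, !Rsum_single; bsimp; lra).
    assert (HSb0 : 0 < K * x * (1 - c) + K * y * (INR (S k) * c)).
    { assert (0 < K * x) by nra; assert (0 < K*y) by nra. assert (0 < K * x * (1 - c)) by nra. assert (0 < K * y * (INR (S k) * c)) by nra. lra. }
    rewrite Ha, Hb, !normalize_Dg, sub_Dg, HSa, HSb by lra.
    apply Rle_ge. eapply Rle_trans; [|apply tnorm_Dg].
    eapply Rle_trans; [|apply (Rsum_ge2 _ _ 1 (S k)); [intros; apply Rabs_pos|lia|unfold d; lia|unfold d; lia]].
    unfold fa, fb. bsimp.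
    assert (sqrt (E / (E+1)) <= 1).
    { apply Rle_trans with (sqrt 1); [|rewrite sqrt_1; lra]. apply sqrt_le_1_alt.
      assert (HE1 : E / (E+1) * (E+1) = E) by (field; lra). set (q := E/(E+1)) in *. clearbody q. destruct (Rle_dec q 1); auto. assert ((q-1)*(E+1) > 0) by (apply Rmult_gt_0_compat; lra). nra. }
    set (Bv := INR (S k) * c) in *.
    assert (HBv : Bv = E + 1 + c) by (unfold Bv; rewrite HSk; lra).
    set (r := (K * x * (1 - c) + 0) / (K * x * (1 - c) + K * y * Bv)).
    assert (Hr2 : (0 + K * y * Bv) / (K * x * (1 - c) + K * y * Bv) = 1 - r) by (unfold r; field; lra).
    assert (Hr : 1/2 + 1/(E+2) <= r).
    { assert (Hrs : r * (K * x * (1 - c) + K * y * Bv) = K * x * (1 - c)) by (unfold r; field; lra).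
      assert (Hq : (1/2 + 1/(E+2)) * (2 * (E+2)) = E + 4) by (field; lra).
      set (q := 1/2 + 1/(E+2)) in *. clearbody q r Bv.
      assert (Hyb : y * Bv <= y * (E+2)) by (apply Rmult_le_compat_l; lra).
      assert (Hxa : x * (1/2) <= x * (1 - c)) by (apply Rmult_le_compat_l; lra).
      destruct (Rle_dec q r); auto. exfalso.
      assert (HrS : r * (K * x * (1 - c) + K * y * Bv) < q * (K * x * (1 - c) + K * y * Bv)) by (apply Rmult_lt_compat_r; lra).
      rewrite Hrs in HrS.
      assert (HK2 : 0 < K * (2*(E+2))) by nra.
      assert (x * (1-c) * (2*(E+2)) < (E+4) * (x*(1-c) + y * Bv)).
      { apply Rmult_lt_reg_l with K; auto. rewrite <- Hq. nra. }
      nra. }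
    rewrite Hr2. fold r.
    assert (HA : 0 < 1 - c) by lra.
    rewrite (Rabs_left ((1 - c + 0) / (E + 2) - r)).
    2:{ assert ((1 - c + 0) / (E + 2) <= 1/(E+2)).
        { unfold Rdiv. apply Rmult_le_compat_r; [apply Rlt_le, Rinv_0_lt_compat; lra|lra]. } lra. }
    rewrite (Rabs_right ((0 + Bv) / (E + 2) - (1 - r))).
    2:{ assert ((0 + Bv) / (E+2) = 1 - (1 - c + 0)/(E+2)) by (rewrite HBv; field; lra).
        assert ((1 - c + 0) / (E + 2) <= 1/(E+2)).
        { unfold Rdiv. apply Rmult_le_compat_r; [apply Rlt_le, Rinv_0_lt_compat; lra|lra]. } lra. }
    assert ((0 + Bv) / (E+2) = 1 - (1 - c + 0)/(E+2)) by (rewrite HBv; field; lra).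
    assert ((1 - c + 0) / (E + 2) <= 1/(E+2)).
    { unfold Rdiv. apply Rmult_le_compat_r; [apply Rlt_le, Rinv_0_lt_compat; lra|lra]. }
    lra.
Qed.

Theorem proposition2 :
  (forall g E : R, 0 < g -> 0 < E ->
     exists (d : nat) (rho : Op),
       density d rho /\ 0 < energy d rho <= E + 1 /\
       tnorm (S d) (opsub (rho_minus d rho)
                          (normalize (S d) (N_minus g d rho)))
         >= sqrt (E / (E + 1))) /\
  (forall g E : R, 0 < g -> 0 < E ->
     exists (d : nat) (rho : Op),
       density d rho /\ 0 < energy d rho <= E + 1 /\
       tnorm (S d) (opsub (rho_plus d rho)
                          (normalize (S d) (N_plus g d rho)))
         >= sqrt (E / (E + 1))).
Proof.
  split; [exact minus_case | exact plus_case].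
Qed.
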